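(* Let $m \geq 1$ and let $d$ be a positive integer with $\gcd(d, 2^m-1)=1$. For $a \in \mathrm{GF}(2^m)$ define $$W_d(a) = \sum_{x \in \mathrm{GF}(2^m)} (-1)^{\mathrm{Tr}(x^d + a x)},$$ where $\mathrm{Tr}\colon \mathrm{GF}(2^m)\to\mathrm{GF}(2)$ is the absolute trace. Suppose that $W_d(a)$ takes precisely three distinct values $A$, $B$, $C$ for $a \in \mathrm{GF}(2^m)^*$. If $A$, $B$, $C$ are all nonzero, then $2^{m+1}$ divides $AB$.
   Context: $W_d$ is the Walsh transform of the power map $x\mapsto x^d$ on $\mathrm{GF}(2^m)$. *)

(* Defs.v *)
From HB Require Import structures.
From mathcomp Require Import all_boot all_order all_algebra all_field.
Set Implicit Arguments. Unset Strict Implicit. Unset Printing Implicit Defensive.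
Import GRing.Theory Num.Theory.
Local Open Scope ring_scope.

(* Absolute trace of GF(2^m) over GF(2): Tr(x) = sum_{i<m} x^(2^i).
   Its value lies in the prime subfield {0,1} of F. *)
Definition abs_trace (F : finFieldType) (m : nat) (x : F) : F :=
  \sum_(i < m) x ^+ (2 ^ i).

Definition chi_tr (F : finFieldType) (m : nat) (y : F) : int :=
  if abs_trace m y == 0 then 1 else -1.

Definition walsh (F : finFieldType) (m d : nat) (a : F) : int :=
  \sum_(x : F) chi_tr m (x ^+ d + a * x).

(* Main.v *)
Require Import Defs.
From HB Require Import structures.
From mathcomp Require Import all_boot all_order all_algebra all_field.
From mathcomp Require Import zify ring.
Import GRing.Theory Num.Theory.
Local Open Scope ring_scope.

Lemma char2F {F : finFieldType} {m : nat} : #|F| = (2 ^ m)%N -> 2 \in [pchar F].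
Proof. by move=> hF; apply: (card_finPcharP hF). Qed.

Lemma frobD {F : finFieldType} {m : nat} (x y : F) (i : nat) : #|F| = (2 ^ m)%N ->
  (x + y) ^+ (2 ^ i) = x ^+ (2 ^ i) + y ^+ (2 ^ i).
Proof.
move=> hF; apply: exprDn_pchar.
rewrite pnatX; apply/orP; left; rewrite pnatE //; exact: char2F hF.
Qed.

Lemma tr_add {F : finFieldType} {m : nat} (x y : F) : #|F| = (2 ^ m)%N ->
  abs_trace m (x + y) = abs_trace m x + abs_trace m y.
Proof.
move=> hF; rewrite /abs_trace -big_split /=; apply: eq_bigr => i _; exact: frobD hF.
Qed.

Lemma tr_sq {F : finFieldType} {m : nat} (x : F) : #|F| = (2 ^ m)%N ->
  abs_trace m x ^+ 2 = abs_trace m x.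
Proof.
move=> hF; rewrite /abs_trace.
have -> : (\sum_(i < m) x ^+ (2 ^ i)) ^+ 2 = \sum_(i < m) (x ^+ (2 ^ i)) ^+ 2.
  apply: (big_morph (fun z : F => z ^+ 2)) => [u v|]; last by rewrite expr0n.
  by have := frobD u v 1 hF; rewrite expn1.
have e : forall i : 'I_m, (x ^+ (2 ^ i)) ^+ 2 = x ^+ (2 ^ i.+1).
  by move=> i; rewrite -exprM expnS mulnC.
rewrite (eq_bigr _ (fun i _ => e i)).
have h1 := big_ord_recr m (fun i => x ^+ (2 ^ i)).
have h2 := big_ord_recl m (fun i => x ^+ (2 ^ i)).
simpl in h1, h2.
have hx : x ^+ (2 ^ m) = x ^+ (2 ^ 0) by rewrite expn0 expr1 -hF expf_card.
apply: (addIr (x ^+ (2 ^ 0))); rewrite -[in RHS]hx -h1 h2 addrC.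
by apply: congr2 => //; apply: eq_bigr => i _; rewrite /bump /=.
Qed.

Lemma tr01 {F : finFieldType} {m : nat} (x : F) : #|F| = (2 ^ m)%N ->
  abs_trace m x = 0 \/ abs_trace m x = 1.
Proof.
move=> hF; have h := tr_sq x hF.
have : abs_trace m x * (abs_trace m x - 1) = 0 by rewrite mulrBr mulr1 -expr2 h subrr.
move/eqP; rewrite mulf_eq0 => /orP [/eqP -> | ]; [by left | by rewrite subr_eq0 => /eqP ->; right].
Qed.

Lemma tr_exists {F : finFieldType} {m : nat} : (1 <= m)%N -> #|F| = (2 ^ m)%N ->
  exists b : F, abs_trace m b = 1.
Proof.
case: m => [//|k] _ hF.
pose p : {poly F} := \sum_(i < k.+1) 'X^(2 ^ i).
have hp : forall x, p.[x] = abs_trace k.+1 x.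
  by move=> x; rewrite /p horner_sum /abs_trace; apply: eq_bigr => i _; rewrite hornerXn.
have pn0 : p != 0.
  apply/eqP => /(congr1 (fun q : {poly F} => q`_(2 ^ k))).
  rewrite coef0 /p coef_sum (bigD1 ord_max) //= coefXn eqxx big1 ?addr0.
  by move/eqP; rewrite oner_eq0.
  move=> i hi; rewrite coefXn eqn_exp2l //.
  case: eqP => // e; move: hi; rewrite -val_eqE /= -e eqxx //=.
have hs : (size p <= (2 ^ k).+1)%N.
  apply: leq_trans (size_sum _ _ _) _.
  apply/bigmax_leqP => i _.
  by rewrite size_polyXn ltnS leq_exp2l // -ltnS.
case: (boolP [forall x : F, abs_trace k.+1 x == 0]) => [/forallP h|].
  have := max_poly_roots pn0 (_ : all (root p) (enum F)) (enum_uniq F).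
  rewrite -cardE hF => H.
  have : (2 ^ k.+1 < (2 ^ k).+1)%N.
    apply: leq_trans (H _) hs; apply/allP => x _; rewrite /root hp; exact: h.
  by rewrite expnS; have := expn_gt0 2 k; lia.
by rewrite negb_forall => /existsP [b hb]; exists b; case: (tr01 b hF) => // e; rewrite e eqxx in hb.
Qed.

Lemma tr0 {F : finFieldType} {m : nat} : abs_trace (F:=F) m 0 = 0.
Proof. by rewrite /abs_trace big1 // => i _; rewrite expr0n expn_eq0. Qed.

Lemma chi0 {F : finFieldType} {m : nat} : chi_tr (F:=F) m 0 = 1.
Proof. by rewrite /chi_tr tr0 eqxx. Qed.

Lemma chiD {F : finFieldType} {m : nat} (u v : F) : #|F| = (2 ^ m)%N ->
  chi_tr m (u + v) = chi_tr m u * chi_tr m v.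
Proof.
move=> hF; rewrite /chi_tr tr_add //.
have h2 := char2F hF.
case: (tr01 u hF) => ->; case: (tr01 v hF) => ->;
  rewrite ?addr0 ?add0r ?eqxx ?oner_eq0 ?mulr1 ?mul1r ?mulrNN //.
by rewrite (addrr_pchar2 h2) eqxx.
Qed.

Lemma chi_sq {F : finFieldType} {m : nat} (u : F) : chi_tr m u * chi_tr m u = 1.
Proof. by rewrite /chi_tr; case: eqP; rewrite ?mulr1 ?mulrNN ?mulr1. Qed.

Lemma sum_chi {F : finFieldType} {m : nat} : (1 <= m)%N -> #|F| = (2 ^ m)%N ->
  \sum_(a : F) chi_tr m a = 0.
Proof.
move=> hm hF; have [b hb] := tr_exists hm hF.
have e : \sum_(a : F) chi_tr m a = \sum_(a : F) chi_tr m (a + b).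
  exact: (reindex_inj (addIr b)).
have hcb : chi_tr m b = -1 by rewrite /chi_tr hb oner_eq0.
move: e; under [X in _ = X]eq_bigr => a _ do rewrite chiD // hcb mulrN1.
rewrite sumrN => /eqP; rewrite -addr_eq0 -mulr2n mulrn_eq0 /=; exact/eqP.
Qed.

Lemma sum_chi_mul {F : finFieldType} {m : nat} (z : F) : (1 <= m)%N -> #|F| = (2 ^ m)%N ->
  \sum_(a : F) chi_tr m (a * z) = if z == 0 then (#|F|)%:Z else 0.
Proof.
move=> hm hF; case: eqP => [->|/eqP hz].
  under eq_bigr => a _ do rewrite mulr0 chi0.
  by rewrite sumr_const natz.
transitivity (\sum_(a : F) chi_tr m a); last exact: sum_chi.
symmetry; exact: (reindex_inj (mulIf hz)).
Qed.

Lemma pow_inj {F : finFieldType} {m d : nat} : (0 < d)%N -> coprime d (2 ^ m - 1) ->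
  #|F| = (2 ^ m)%N -> injective (fun x : F => x ^+ d).
Proof.
move=> hd hc hF x y /= e.
have hq : (2 ^ m - 1).+1 = #|F| by rewrite hF subn1 prednK // expn_gt0.
have unit1 : forall z : F, z != 0 -> z ^+ (2 ^ m - 1) = 1.
  move=> z hz; apply: (mulIf hz); rewrite mul1r -exprSr hq; exact: expf_card.
have [y0|yn0] := eqVneq y 0.
  move: e; rewrite y0 expr0n gtn_eqF // => /eqP; rewrite expf_eq0 hd /=; exact/eqP.
have xn0 : x != 0.
  apply/eqP => x0; move: e; rewrite x0 expr0n gtn_eqF // => /esym/eqP.
  by rewrite expf_eq0 hd (negbTE yn0).
set z := x / y.
have zn0 : z != 0 by rewrite mulf_eq0 invr_eq0 negb_or xn0 yn0.
have zd : z ^+ d = 1 by rewrite /z exprMn exprVn e mulfV // expf_eq0 negb_and yn0 orbT.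
have z1 : z = 1.
  case: (egcdnP (2 ^ m - 1) hd) => km kn h _.
  move: hc; rewrite /coprime => /eqP g1; rewrite g1 in h.
  have : z ^+ (km * d) = z ^+ (kn * (2 ^ m - 1) + 1).
    by rewrite h.
  rewrite mulnC exprM zd expr1n exprD mulnC exprM unit1 // expr1n mul1r => hz1; by rewrite -[z]expr1 -hz1.
by move: z1; rewrite /z => /(congr1 (fun t => t * y)); rewrite mulfVK // mul1r.
Qed.

Definition gg {F : finFieldType} (m d : nat) (x : F) : int := chi_tr m (x ^+ d).

Lemma walshE {F : finFieldType} {m d : nat} (a : F) : #|F| = (2 ^ m)%N ->
  walsh m d a = \sum_(x : F) gg m d x * chi_tr m (a * x).
Proof. by move=> hF; apply: eq_bigr => x _; rewrite chiD. Qed.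

Lemma sum_if0 {F : finFieldType} (h : F -> int) (k : int) :
  \sum_(x : F) h x * (if x == 0 then k else 0) = h 0 * k.
Proof. by rewrite (bigD1 0) //= eqxx big1 ?addr0 // => x /negbTE ->; rewrite mulr0. Qed.

Lemma sum_ifeq {F : finFieldType} {m : nat} (h : F -> int) (x0 : F) : #|F| = (2 ^ m)%N ->
  \sum_(y : F) (if x0 + y == 0 then h y else 0) = h x0.
Proof.
move=> hF; have e : forall y, (x0 + y == 0) = (y == x0).
  by move=> y; rewrite addr_eq0 (oppr_pchar2 (char2F hF)) eq_sym.
under eq_bigr => y _ do rewrite e.
by rewrite -big_mkcond /= big_pred1_eq.
Qed.

Lemma mul_if (b : bool) (c k : int) : c * (if b then k else 0) = if b then c * k else 0.
Proof. by case: b; rewrite ?mulr0. Qed.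

Lemma gg0 {F : finFieldType} {m d : nat} : (0 < d)%N -> gg (F:=F) m d 0 = 1.
Proof. by move=> hd; rewrite /gg expr0n gtn_eqF // chi0. Qed.

Lemma gg_sq {F : finFieldType} {m d : nat} (x : F) : gg m d x * gg m d x = 1.
Proof. exact: chi_sq. Qed.

Lemma S1 {F : finFieldType} {m d : nat} : (1 <= m)%N -> #|F| = (2 ^ m)%N -> (0 < d)%N ->
  \sum_(a : F) walsh m d a = (#|F|)%:Z.
Proof.
move=> hm hF hd.
under eq_bigr => a _ do rewrite walshE //.
rewrite exchange_big /=.
under eq_bigr => x _ do rewrite -mulr_sumr sum_chi_mul //.
by rewrite sum_if0 gg0 // mul1r.
Qed.

Lemma S2 {F : finFieldType} {m d : nat} : (1 <= m)%N -> #|F| = (2 ^ m)%N -> (0 < d)%N ->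
  \sum_(a : F) walsh m d a ^+ 2 = (#|F|)%:Z * (#|F|)%:Z.
Proof.
move=> hm hF hd.
have e : forall a : F, walsh m d a ^+ 2 =
    \sum_(x : F) \sum_(y : F) (gg m d x * gg m d y) * chi_tr m (a * (x + y)).
  move=> a; rewrite expr2 walshE // mulr_suml; apply: eq_bigr => x _.
  rewrite mulr_sumr; apply: eq_bigr => y _.
  by rewrite mulrDr chiD // mulrACA.
under eq_bigr => a _ do rewrite e.
rewrite exchange_big /=.
under eq_bigr => x _ do rewrite exchange_big /=.
under eq_bigr => x _ do under eq_bigr => y _ do rewrite -mulr_sumr sum_chi_mul // mul_if.
under eq_bigr => x _ do rewrite (sum_ifeq (fun y => gg m d x * gg m d y * (#|F|)%:Z) x hF) gg_sq mul1r.
by rewrite sumr_const -mulr_natr natz.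
Qed.

Lemma S3 {F : finFieldType} {m d : nat} : (1 <= m)%N -> #|F| = (2 ^ m)%N -> (0 < d)%N ->
  \sum_(a : F) walsh m d a ^+ 3 =
  (#|F|)%:Z * \sum_(x : F) \sum_(y : F) gg m d x * gg m d y * gg m d (x + y).
Proof.
move=> hm hF hd.
have e : forall a : F, walsh m d a ^+ 3 =
    \sum_(x : F) \sum_(y : F) \sum_(z : F)
      (gg m d x * gg m d y * gg m d z) * chi_tr m (a * (x + y + z)).
  move=> a; rewrite exprS expr2 walshE // mulr_suml; apply: eq_bigr => x _.
  rewrite mulr_suml mulr_sumr; apply: eq_bigr => y _.
  rewrite mulr_sumr mulr_sumr; apply: eq_bigr => z _.
  rewrite !mulrDr !chiD //.
  ring.
under eq_bigr => a _ do rewrite e.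
rewrite exchange_big /=.
under eq_bigr => x _ do rewrite exchange_big /=.
under eq_bigr => x _ do under eq_bigr => y _ do rewrite exchange_big /=.
under eq_bigr => x _ do under eq_bigr => y _ do under eq_bigr => z _ do
  rewrite -mulr_sumr sum_chi_mul // mul_if.
under eq_bigr => x _ do under eq_bigr => y _ do
  rewrite (sum_ifeq (fun z => gg m d x * gg m d y * gg m d z * (#|F|)%:Z) (x + y) hF).
rewrite mulr_sumr; apply: eq_bigr => x _; rewrite mulr_sumr; apply: eq_bigr => y _.
by rewrite mulrC.
Qed.

Lemma T_dvd {F : finFieldType} {m d : nat} : (1 <= m)%N -> #|F| = (2 ^ m)%N -> (0 < d)%N ->
  coprime d (2 ^ m - 1) ->
  ((#|F|)%:Z %| \sum_(x : F) \sum_(y : F) gg m d x * gg m d y * gg m d (x + y))%Z.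
Proof.
move=> hm hF hd hc.
pose f (x y : F) := x ^+ d + y ^+ d + (x + y) ^+ d.
set T := \sum_(x : F) \sum_(y : F) _.
have eT : T = \sum_(x : F) \sum_(y : F) chi_tr m (f x y).
  by apply: eq_bigr => x _; apply: eq_bigr => y _; rewrite /f !chiD.
have eTc : forall c : F, c != 0 ->
    T = \sum_(x : F) \sum_(y : F) chi_tr m (c ^+ d * f x y).
  move=> c hc0; rewrite eT (reindex_inj (mulfI hc0)) /=.
  apply: eq_bigr => x _; rewrite (reindex_inj (mulfI hc0)) /=.
  apply: eq_bigr => y _; congr (chi_tr m _).
  by rewrite /f -mulrDr !exprMn -!mulrDr.
pose U := \sum_(c : F) \sum_(x : F) \sum_(y : F) chi_tr m (c ^+ d * f x y).
have hU1 : ((#|F|)%:Z %| U)%Z.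
  rewrite /U exchange_big /=.
  under eq_bigr => x _ do rewrite exchange_big /=.
  apply: rpred_sum => x _; apply: rpred_sum => y _.
  have -> : \sum_(c : F) chi_tr m (c ^+ d * f x y) = \sum_(e : F) chi_tr m (e * f x y).
    by symmetry; exact: (reindex_inj (pow_inj hd hc hF)).
  by rewrite sum_chi_mul //; case: eqP => _; [exact: dvdzz | exact: dvdz0].
have h0 : \sum_(x : F) \sum_(y : F) chi_tr m (0 ^+ d * f x y) = (#|F|)%:Z * (#|F|)%:Z.
  under eq_bigr => x _ do under eq_bigr => y _ do rewrite expr0n gtn_eqF // mul0r chi0.
  by rewrite !sumr_const -mulr_natr natz.
have h1 : \sum_(c : F | c != 0) T = T *+ (#|F|).-1 by rewrite sumr_const cardC1.
have hU2 : U = (#|F|)%:Z * (#|F|)%:Z + T *+ (#|F|).-1.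
  rewrite /U (bigD1 0) //.
  rewrite [X in _ + X = _](eq_bigr (fun _ => T)); last by move=> c hc0; rewrite (eTc c hc0).
  by rewrite h0 -h1.
have h2 : ((#|F|)%:Z %| T *+ (#|F|).-1)%Z.
  by move: hU1; rewrite hU2 rpredDl // dvdz_mull // dvdzz.
have hq : (#|F|.-1).+1 = #|F| by rewrite prednK // hF expn_gt0.
have -> : T = T *+ #|F| - T *+ (#|F|).-1 by rewrite -{1}hq mulrSr addrC addKr.
apply: rpredB h2; rewrite -mulr_natr natz; exact: dvdz_mull (dvdzz _).
Qed.

Lemma W0 {F : finFieldType} {m d : nat} : (1 <= m)%N -> #|F| = (2 ^ m)%N -> (0 < d)%N ->
  coprime d (2 ^ m - 1) -> walsh (F:=F) m d 0 = 0.
Proof.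
move=> hm hF hd hc; rewrite /walsh.
under eq_bigr => x _ do rewrite mul0r addr0.
transitivity (\sum_(y : F) chi_tr m y); last exact: sum_chi.
symmetry; exact: (reindex_inj (pow_inj hd hc hF)).
Qed.

Lemma W_even {F : finFieldType} {m d : nat} (a : F) : (1 <= m)%N -> #|F| = (2 ^ m)%N ->
  (2 %| walsh m d a)%Z.
Proof.
move=> hm hF.
have -> : walsh m d a = (walsh m d a - (#|F|)%:Z) + (#|F|)%:Z by rewrite subrK.
apply: rpredD.
  have -> : (#|F|)%:Z = \sum_(x : F) 1 by rewrite sumr_const natz.
  rewrite /walsh -sumrB; apply: rpred_sum => x _.
  by rewrite /chi_tr; case: eqP => _; rewrite ?subrr ?dvdz0.
rewrite hF; case: m hm {hF} => // k _; rewrite expnS PoszM; exact: dvdz_mulr (dvdzz _).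
Qed.

Lemma nat_core (m x y : nat) : (2 ^ (2 * m) %| x * y)%N -> ~~ (2 ^ m.+1 %| x)%N ->
  (2 ^ m %| y)%N.
Proof.
move=> h1 h2.
have [->|yp] := posnP y; first exact: dvdn0.
have [x0|xp] := posnP x; first by rewrite x0 dvdn0 in h2.
rewrite pfactor_dvdn // in h1 *; rewrite pfactor_dvdn // -ltnNge ltnS in h2.
rewrite lognM // in h1; rewrite pfactor_dvdn //; lia.
by rewrite muln_gt0 xp.
Qed.

Lemma fin_arith (a b c : int) : 0 < a -> a + b <= c -> c <= b -> False.
Proof. lia. Qed.

Theorem lemma9 (F : finFieldType) (m d : nat) (A B C : int) :
  (1 <= m)%N -> #|F| = (2 ^ m)%N -> (0 < d)%N -> coprime d (2 ^ m - 1) ->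
  A != B -> B != C -> A != C ->
  (forall a : F, a != 0 -> walsh m d a \in [:: A; B; C]) ->
  (exists2 a : F, a != 0 & walsh m d a = A) ->
  (exists2 a : F, a != 0 & walsh m d a = B) ->
  (exists2 a : F, a != 0 & walsh m d a = C) ->
  A != 0 -> B != 0 -> C != 0 ->
  ((2 ^ m.+1)%:Z %| A * B)%Z.
Proof.
move=> hm hF hd hc hAB hBC hAC hall [aA aA0 hA] [aB aB0 hB] [aC aC0 hC] A0 B0 C0.
have s1 := S1 hm hF hd; have s2 := S2 hm hF hd; have s3 := S3 hm hF hd.
have tq := T_dvd hm hF hd hc.
rewrite hF in s1 s2 s3 tq.
set q : int := (2 ^ m)%:Z in s1 s2 s3 tq.
set T := \sum_(x : F) _ in s3 tq.
have key : \sum_(a : F) (walsh m d a - A) * (walsh m d a - B) * (walsh m d a - C)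
    = - (A * B * C).
  rewrite (bigD1 0) //= W0 // big1 ?addr0; first by ring.
  move=> a ha; have := hall a ha; rewrite !inE => /or3P [] /eqP ->;
    by rewrite ?subrr ?mulr0 ?mul0r.
have expd : \sum_(a : F) (walsh m d a - A) * (walsh m d a - B) * (walsh m d a - C)
    = \sum_(a : F) walsh m d a ^+ 3 - (A + B + C) * \sum_(a : F) walsh m d a ^+ 2
      + (A * B + B * C + C * A) * \sum_(a : F) walsh m d a - A * B * C * q.
  rewrite (eq_bigr (fun a => walsh m d a ^+ 3 - (A + B + C) * walsh m d a ^+ 2
      + (A * B + B * C + C * A) * walsh m d a - A * B * C)); last by move=> a _; ring.
  rewrite sumrB big_split /= sumrB -!mulr_sumr sumr_const -mulr_natr natz hF.
  by rewrite !mulrA.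
rewrite expd s1 s2 s3 in key.
have eA : (2 %| A)%Z by rewrite -hA; exact: W_even.
have eB : (2 %| B)%Z by rewrite -hB; exact: W_even.
have bnd : A ^+ 2 + C ^+ 2 <= q * q.
  have aCA : aC != aA by apply/eqP => e; move: hAC; rewrite -hA -hC e eqxx.
  rewrite -s2 (bigD1 aA) //= (bigD1 aC) //= hA hC.
  have : 0 <= \sum_(i | (i != aA) && (i != aC)) walsh m d i ^+ 2.
    by apply: sumr_ge0 => a _; exact: sqr_ge0.
  by rewrite addrA lerDl.
case/dvdzP: tq => t ht.
case/dvdzP: eA => a2 ha2; case/dvdzP: eB => b2 hb2.
set X := q * q - (A + B) * q + A * B * q - A * B.
have hX : X * (C + q) = q * q * (t + q - 2 * (A + B) + A * B).
  have E : q * T = (A + B + C) * (q * q) - (A * B + B * C + C * A) * q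
                   + A * B * C * q - A * B * C by lia.
  transitivity (q * T + q * q * (q - 2 * (A + B) + A * B)).
    by rewrite E /X; ring.
  by rewrite ht; ring.
have hq : q = 2 * (2 ^ m.-1)%:Z.
  by rewrite /q -{1}(prednK hm) expnS PoszM.
have h2q : (2 ^ m.+1)%:Z = 2 * q by rewrite expnS PoszM.
apply/negPn/negP => hnd.
have hXA : ((2 ^ m.+1)%:Z %| X + A * B)%Z.
  apply/dvdzP; exists ((2 ^ m.-1)%:Z - a2 - b2 + 2 * a2 * b2).
  rewrite h2q /X hq ha2 hb2; ring.
have hXn : ~~ ((2 ^ m.+1)%:Z %| X)%Z.
  apply/negP => hX2; move/negP: hnd; apply.
  have -> : A * B = (X + A * B) - X by ring.
  exact: rpredB.
have hqq : (q * q %| X * (C + q))%Z by rewrite hX; exact: dvdz_mulr (dvdzz _).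
have hqC : (q %| C + q)%Z.
  rewrite dvdzE; apply: (@nat_core m `|X|%N).
    move: hqq; rewrite dvdzE !abszM /q /=.
    by rewrite mul2n -addnn expnD.
  by move: hXn; rewrite dvdzE.
have : (q %| C)%Z by move: hqC; rewrite rpredDr // dvdzz.
case/dvdzP => k hk.
have qpos : 0 < q by rewrite /q ltz_nat expn_gt0.
have k0 : k != 0 by apply: contraNneq C0 => k0; rewrite hk k0 mul0r.
have hA2 : 0 < A ^+ 2 by rewrite exprn_even_gt0 // A0 orbT.
have hk2 : 0 < k ^+ 2 by rewrite exprn_even_gt0 // k0 orbT.
have hk1 : 1 <= k ^+ 2 by move: hk2; generalize (k ^+ 2) => z; clear; lia.
have hQ : 0 <= q * q by rewrite mulr_ge0 // ltW.
have := ler_peMl hQ hk1.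
move: bnd; rewrite hk exprMn -(expr2 q).
move=> h1 h2; move: hA2 h1 h2; exact: fin_arith.
Qed.
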